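(* Consider the CCDE setting described in the context, with user set $V$, core $\mathscr{R}^*_{\mathrm{CO}}(V)$, fundamental partition $\mathcal{P}^*$ (with $|\mathcal{P}^*|\ge2$), $K=|\mathcal{P}^*|-1$, $\mathbb{Q}_K=\{z/K:z\in\mathbb{Z}\}$, weights $w_V\in\mathbb{R}_{>0}^{|V|}$ and $g(r_V)=\sum_{i\in V}r_i^2/w_i$. Run the following steepest descent algorithm (SDA): start from any $r^{(0)}_V\in\mathscr{R}^*_{\mathrm{CO}}(V)\cap\mathbb{Q}_K^{|V|}$ and set $n=0$; repeat: (1) for each $i\in V$, let $\mathrm{dep}(r^{(n)}_V,i)$ be the minimal (inclusion-wise smallest) minimizer of $\min\{f_{R_{\mathrm{CO}}}(X)-r^{(n)}(X): i\in X\subseteq V\}$; (2) let $(i^*,j^* )$ minimize $g\big(r^{(n)}_V+\frac1K(\chi_i-\chi_j)\big)$ over pairs $i,j\in V$ with $j\in\mathrm{dep}(r^{(n)}_V,i)\setminus\{i\}$; (3) if $g\big(r^{(n)}_V+\frac1K(\chi_{i^*}-\chi_{j^*})\big)<g(r^{(n)}_V)$, set $r^{(n+1)}_V=r^{(n)}_V+\frac1K(\chi_{i^*}-\chi_{j^*})$ and $n\leftarrow n+1$; otherwise set $r^{(n+1)}_V=r^{(n)}_V$; until $r^{(n+1)}_V=r^{(n)}_V$, and output $r^{(n)}_V$. Then the estimation sequence $\{r^{(n)}_V\}$ generated by the SDA converges to the minimizer $r^*_V$ of $\min\{g(r_V): r_V\in\mathscr{R}^*_{\mathrm{CO}}(V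)\cap\mathbb{Q}_K^{|V|}\}$.
   Context: CCDE setting: there is a finite collection of independent packets, each uniformly distributed over a finite field; each user $i\in V$ ($|V|>1$) observes $Z_i$, a subset of the packets, and entropy is measured in packets, so that for $X\subseteq V$, $H(X)$ is the number of distinct packets observed by users in $X$ (integer-valued). Write $r(X)=\sum_{i\in X}r_i$ and $H(X\mid Y)=H(X\cup Y)-H(Y)$. The achievable region is $\mathscr{R}(V)=\{r_V\in\mathbb{R}^{|V|}: r(X)\ge H(X\mid V\setminus X)\ \forall X\subsetneq V\}$, $R_{\mathrm{CO}}=\min\{r(V): r_V\in\mathscr{R}(V)\}$, and the core is $\mathscr{R}^*_{\mathrm{CO}}(V)=\{r_V\in\mathscr{R}(V): r(V)=R_{\mathrm{CO}}\}$. For $\alpha\in\mathbb{R}$, $f_\alpha(\emptyset)=0$ and $f_\alpha(X)=\alpha-H(V\setminus X\mid X)$ for $X\neq\emptyset$. The fundamental partition $\mathcal{P}^*$ is the finest partition of $V$ minimizing $\sum_{C\in\mathcal{P}}f_{R_{\mathrm{CO}}}(C)$ over partitions $\mathcal{P}$ of $V$. $\chi_i$ is the characteristic vector of $\{i\}$. *)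

(* Defs.v *)
From HB Require Import structures.
From mathcomp Require Import all_boot all_order all_algebra.
From mathcomp Require Import reals.
Set Implicit Arguments. Unset Strict Implicit. Unset Printing Implicit Defensive.
Import Order.TTheory GRing.Theory Num.Theory.
Local Open Scope ring_scope.

Section CCDE.
Variables (R : realType) (V Pk : finType) (Z : V -> {set Pk}).

(* H(X) = number of distinct packets observed by users in X *)
Definition H (X : {set V}) : nat := #|\bigcup_(i in X) Z i|.

Definition Hc (X Y : {set V}) : R := (H (X :|: Y))%:R - (H Y)%:R.

Definition rsum (r : {ffun V -> R}) (X : {set V}) : R := \sum_(i in X) r i.

Definition achievable (r : {ffun V -> R}) : Prop :=
  forall X : {set V}, X \proper [set: V] -> Hc X (~: X) <= rsum r X.

Definition is_RCO (RCO : R) : Prop :=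
  (exists r, achievable r /\ rsum r [set: V] = RCO) /\
  (forall r, achievable r -> RCO <= rsum r [set: V]).

Definition in_core (RCO : R) (r : {ffun V -> R}) : Prop :=
  achievable r /\ rsum r [set: V] = RCO.

Definition f (alpha : R) (X : {set V}) : R :=
  if X == set0 then 0 else alpha - Hc (~: X) X.

Definition fsum (alpha : R) (P : {set {set V}}) : R := \sum_(C in P) f alpha C.

Definition finer (P1 P2 : {set {set V}}) : Prop :=
  forall C, C \in P1 -> exists2 D, D \in P2 & C \subset D.

Definition minimizing_partition (alpha : R) (P : {set {set V}}) : Prop :=
  partition P [set: V] /\
  forall Q, partition Q [set: V] -> fsum alpha P <= fsum alpha Q.

Definition fundamental_partition (RCO : R) (P : {set {set V}}) : Prop :=
  minimizing_partition RCO P /\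
  forall Q, minimizing_partition RCO Q -> finer P Q.

Definition in_QK (K : nat) (r : {ffun V -> R}) : Prop :=
  forall i, exists z : int, r i = z%:~R / K%:R.

Definition g (w : {ffun V -> R}) (r : {ffun V -> R}) : R :=
  \sum_(i : V) r i ^+ 2 / w i.

Definition is_dep (RCO : R) (r : {ffun V -> R}) (i : V) (D : {set V}) : Prop :=
  i \in D /\
  (forall X : {set V}, i \in X -> f RCO D - rsum r D <= f RCO X - rsum r X) /\
  (forall X : {set V}, i \in X ->
     f RCO X - rsum r X <= f RCO D - rsum r D -> D \subset X).

Definition move (K : nat) (r : {ffun V -> R}) (i j : V) : {ffun V -> R} :=
  [ffun k => r k + ((k == i)%:R - (k == j)%:R) / K%:R].

Definition admissible (RCO : R) (r : {ffun V -> R}) (i j : V) : Prop :=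
  exists D, is_dep RCO r i D /\ j \in D /\ j != i.

(* one iteration of the SDA: r' is a possible r^(n+1) given r = r^(n)
   (ties in step (2) broken arbitrarily) *)
Definition SDA_step (RCO : R) (K : nat) (w : {ffun V -> R})
    (r r' : {ffun V -> R}) : Prop :=
  (exists i j, admissible RCO r i j /\
     (forall i' j', admissible RCO r i' j' ->
        g w (move K r i j) <= g w (move K r i' j')) /\
     g w (move K r i j) < g w r /\ r' = move K r i j)
  \/
  ((forall i' j', admissible RCO r i' j' -> g w r <= g w (move K r i' j')) /\
   r' = r).

Definition g_minimizer (RCO : R) (K : nat) (w r : {ffun V -> R}) : Prop :=
  in_core RCO r /\ in_QK K r /\
  forall s, in_core RCO s -> in_QK K s -> g w r <= g w s.

End CCDE.

(* Main.v *)
Require Import Defs.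
From HB Require Import structures.
From mathcomp Require Import all_boot all_order all_algebra.
From mathcomp Require Import reals lra zify.
From Stdlib Require Import Classical_Prop.
Import Order.TTheory GRing.Theory Num.Theory.
Local Open Scope ring_scope.

Section Aux.
Variables (R : realType) (V Pk : finType) (Z : V -> {set Pk}) (RCO : R).

Lemma H_mono (A B : {set V}) : A \subset B -> (H Z A <= H Z B)%N.
Proof.
move=> sAB; apply: subset_leq_card; apply/bigcupsP => i iA.
by apply: (bigcup_sup i); apply: (subsetP sAB).
Qed.

Lemma H_sub (A B : {set V}) :
  (H Z (A :|: B) + H Z (A :&: B) <= H Z A + H Z B)%N.
Proof.
rewrite /H bigcup_setU -[X in (_ <= X)%N]cardsUI leq_add2l; apply: subset_leq_card.
apply/bigcupsP => i; rewrite inE => /andP[iA iB].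
by rewrite subsetI (bigcup_sup i iA) (bigcup_sup i iB).
Qed.

Lemma fE (X : {set V}) : X != set0 ->
  f Z RCO X = RCO - (H Z setT)%:R + (H Z X)%:R.
Proof.
move=> /negbTE X0; rewrite /f X0 /Hc setUC setUCr; lra.
Qed.

Lemma f_sub (A B : {set V}) : A :&: B != set0 ->
  f Z RCO (A :|: B) + f Z RCO (A :&: B) <= f Z RCO A + f Z RCO B.
Proof.
move=> AB0.
have A0 : A != set0 by apply: contraNneq AB0 => ->; rewrite set0I.
have B0 : B != set0 by apply: contraNneq AB0 => ->; rewrite setI0.
have U0 : A :|: B != set0.
  by apply: contraNneq A0 => /eqP; rewrite setU_eq0 => /andP[/eqP -> _].
rewrite !fE //.
have := H_sub A B; rewrite -(ler_nat R) !natrD => h; lra.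
Qed.

Definition rsumU (r : {ffun V -> R}) (A B : {set V}) :
  rsum r (A :|: B) + rsum r (A :&: B) = rsum r A + rsum r B.
Proof.
rewrite /rsum (big_mkcond (fun i => i \in A :|: B)) (big_mkcond (fun i => i \in A :&: B)).
rewrite (big_mkcond (fun i => i \in A)) (big_mkcond (fun i => i \in B)) -!big_split /=.
by apply: eq_bigr => i _; rewrite !inE; case: (i \in A); case: (i \in B); rewrite /= ?addr0 ?add0r.
Qed.


Lemma rsum0 (r : {ffun V -> R}) : rsum r set0 = 0.
Proof. by rewrite /rsum big_set0. Qed.

Lemma rsumUD (r : {ffun V -> R}) (A B : {set V}) : A :&: B = set0 ->
  rsum r (A :|: B) = rsum r A + rsum r B.
Proof. by move=> AB; rewrite -rsumU AB rsum0 addr0. Qed.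

Lemma rsumC (r : {ffun V -> R}) (A : {set V}) :
  rsum r (~: A) = rsum r setT - rsum r A.
Proof. by rewrite -(setUCr A) rsumUD ?setICr //; lra. Qed.

Definition core (r : {ffun V -> R}) :=
  rsum r setT = RCO /\ forall Y, rsum r Y <= f Z RCO Y.

Definition tight (r : {ffun V -> R}) (Y : {set V}) := rsum r Y == f Z RCO Y.

Lemma core_iff (r : {ffun V -> R}) : in_core Z RCO r <-> core r.
Proof.
split.
  move=> [ach sT]; split => // Y.
  have [->|Y0] := eqVneq Y set0; first by rewrite rsum0 /f eqxx.
  have : ~: Y \proper setT by rewrite properT; apply: contraNneq Y0 => h; rewrite -[Y]setCK h setCT.
  move/ach; rewrite setCK /f (negbTE Y0) rsumC sT; lra.
move=> [sT hY]; split => // X; rewrite properT => XT.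
have Y0 : ~: X != set0 by apply: contraNneq XT => h; rewrite -[X]setCK h setC0.
have := hY (~: X); rewrite /f (negbTE Y0) setCK rsumC sT; lra.
Qed.

Lemma f_setT : (0 < #|V|)%N -> f Z RCO setT = RCO.
Proof.
move=> V0; rewrite /f.
have -> : ([set: V] == set0) = false.
  apply/negbTE; apply/set0Pn; case/card_gt0P: V0 => v _; by exists v; rewrite inE.
rewrite /Hc setCT set0U; lra.
Qed.

Lemma tight_setT r : (0 < #|V|)%N -> core r -> tight r setT.
Proof. by move=> V0 [sT _]; rewrite /tight f_setT // sT. Qed.

Lemma tightIU r A B : core r -> tight r A -> tight r B -> A :&: B != set0 ->
  tight r (A :&: B) /\ tight r (A :|: B).
Proof.
move=> [_ hY] /eqP tA /eqP tB AB.
have h1 := hY (A :&: B); have h2 := hY (A :|: B); have h3 := @f_sub A B AB.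
have h4 := rsumU r A B.
by split; apply/eqP; lra.
Qed.

Lemma dep_min (r : {ffun V -> R}) (i : V) : (0 < #|V|)%N -> core r ->
  exists D : {set V}, [/\ i \in D, tight r D & forall Y : {set V}, i \in Y -> tight r Y -> D \subset Y].
Proof.
move=> V0 cr.
have PT : (i \in [set: V]) && tight r setT by rewrite inE tight_setT.
case: (@arg_minnP _ setT (fun D : {set V} => (i \in D) && tight r D) (fun D => #|D|) PT) => D /andP[iD tD] minD.
exists D; split => // Y iY tY.
have [tI _] := @tightIU r Y D cr tY tD (introT (set0Pn _) (ex_intro _ i (introT setIP (conj iY iD)))).
have le := minD (Y :&: D) (introT andP (conj (introT setIP (conj iY iD)) tI)).
have /eqP e : Y :&: D == D by rewrite eqEcard subsetIr le.
by rewrite -e subsetIl.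
Qed.

Lemma is_dep_of (r : {ffun V -> R}) i (D : {set V}) : core r -> i \in D -> tight r D ->
  (forall Y : {set V}, i \in Y -> tight r Y -> D \subset Y) -> is_dep Z RCO r i D.
Proof.
move=> [_ hY] iD /eqP tD minD; split => //; split.
  by move=> X _; have := hY X; lra.
move=> X iX le; apply: minD => //; apply/eqP; have := hY X; lra.
Qed.

Lemma is_dep_slack (r : {ffun V -> R}) i (D Y : {set V}) : core r -> is_dep Z RCO r i D -> i \in Y ->
  ~~ (D \subset Y) -> rsum r Y < f Z RCO Y.
Proof.
move=> [_ hY] [_ [_ h3]] iY nDY.
have h : f Z RCO D - rsum r D < f Z RCO Y - rsum r Y.
  by rewrite ltNge; apply/negP => le; move: nDY; rewrite (h3 Y iY le).
have := hY D; lra.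
Qed.

Lemma cover_bound (x y : {ffun V -> R}) (D : {set V}) : core x -> core y -> tight y D ->
  forall U : {set V}, (forall u, u \in U -> exists T : {set V},
     [/\ u \in T, T \subset U, tight x T & T :&: D != set0]) ->
  f Z RCO (D :|: U) <= rsum y (D :\: U) + rsum x U.
Proof.
move=> cx cy tD U; have [n] := ubnP #|U|; elim: n U => // n IH U ltU hcov.
have [->|U0] := eqVneq U set0.
  by rewrite setU0 setD0 rsum0 addr0 (eqP tD).
case/set0Pn: U0 => u uU.
have [T0 [uT0 sT0 tT0 T0D]] := hcov u uU.
have PT0 : [&& T0 \subset U, tight x T0 & T0 :&: D != set0] by rewrite sT0 tT0.
case: (@arg_maxnP _ T0 (fun T : {set V} => [&& T \subset U, tight x T & T :&: D != set0]) (fun T => #|T|) PT0) => T /and3P[sTU tT TD] maxT.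
pose U' := U :\: T.
have ltU' : (#|U'| < n)%N.
  rewrite /U' cardsD (setIidPr sTU).
  have : (0 < #|T|)%N.
    by rewrite card_gt0; apply: contraNneq TD => ->; rewrite set0I.
  have : (#|T| <= #|U|)%N by apply: subset_leq_card.
  lia.
have cov' : forall v, v \in U' -> exists Tv : {set V},
     [/\ v \in Tv, Tv \subset U', tight x Tv & Tv :&: D != set0].
  move=> v; rewrite inE => /andP[vT vU].
  have [Tv [vTv sTv tTv TvD]] := hcov v vU.
  have dis : Tv :&: T = set0.
    apply/eqP; apply/negPn/negP => ne.
    have [_ tU] := @tightIU x Tv T cx tTv tT ne.
    have P' : [&& Tv :|: T \subset U, tight x (Tv :|: T) & (Tv :|: T) :&: D != set0].
      rewrite subUset sTv sTU tU /=.
      apply: contraNneq TD => h; rewrite -subset0 -h; apply: setSI; apply: subsetUr.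
    have le := maxT _ P'.
    have /eqP e : T == Tv :|: T by rewrite eqEcard subsetUr; exact: le.
    by move: vT; rewrite e inE vTv.
  exists Tv; split => //.
  apply/subsetP => w wTv; rewrite inE (subsetP sTv w wTv) andbT.
  apply/negP => wT; have : w \in Tv :&: T by rewrite inE wTv wT.
  by rewrite dis inE.
have IHU := IH U' ltU' cov'.
have eI : (D :|: U') :&: T = D :&: T.
  apply/setP => w; rewrite !inE; have := subsetP sTU w.
  by case: (w \in T); case: (w \in D); case: (w \in U).
have eU : (D :|: U') :|: T = D :|: U.
  apply/setP => w; rewrite !inE; have := subsetP sTU w.
  by case: (w \in T); case: (w \in D); case: (w \in U) => // /(_ isT).
have ne : (D :|: U') :&: T != set0 by rewrite eI setIC.
have hs := @f_sub _ _ ne; rewrite eI eU in hs.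
have h1 : rsum y (D :&: T) <= f Z RCO (D :&: T) by case: cy => _; apply.
have h2 := eqP tT.
have h3 : rsum x U = rsum x U' + rsum x T.
  rewrite -rsumUD; last first.
    apply/setP => w; rewrite !inE; by case: (w \in T); rewrite ?andbF.
  congr rsum; apply/setP => w; rewrite !inE; have := subsetP sTU w.
  by case: (w \in T); case: (w \in U) => // /(_ isT).
have h4 : rsum y (D :\: U') = rsum y (D :\: U) + rsum y (D :&: T).
  rewrite -rsumUD; last first.
    apply/setP => w; rewrite !inE; have := subsetP sTU w.
    by case: (w \in T); case: (w \in U); rewrite ?andbF //= => /(_ isT).
  congr rsum; apply/setP => w; rewrite !inE; have := subsetP sTU w.
  by case: (w \in T); case: (w \in D); case: (w \in U) => // /(_ isT).
lra.
Qed.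

Lemma exchange (x y : {ffun V -> R}) (i : V) : (0 < #|V|)%N -> core x -> core y ->
  y i < x i -> exists j, [/\ x j < y j,
    (forall Y : {set V}, i \in Y -> tight y Y -> j \in Y) &
    (forall T : {set V}, j \in T -> tight x T -> i \in T)].
Proof.
move=> V0 cx cy lt.
have [D [iD tD minD]] := @dep_min y i V0 cy.
apply: NNPP => nex.
have key : forall j, j \in D -> x j < y j ->
    exists T : {set V}, [/\ j \in T, tight x T & i \notin T].
  move=> j jD ltj; apply: NNPP => nT; apply: nex; exists j; split => //.
    by move=> Y iY tY; exact: (subsetP (minD Y iY tY) j jD).
  move=> T jT tT; apply/negPn/negP => iT; apply: nT; by exists T.
pose U := [set u | [exists T : {set V}, [&& u \in T, tight x T, i \notin T & T :&: D != set0]]].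
have cov : forall u, u \in U -> exists T : {set V},
     [/\ u \in T, T \subset U, tight x T & T :&: D != set0].
  move=> u; rewrite inE => /existsP[T /and4P[uT tT iT TD]].
  exists T; split => //; apply/subsetP => w wT; rewrite inE; apply/existsP; exists T.
  by rewrite wT tT iT TD.
have hb := @cover_bound x y D cx cy tD U cov.
have iU : i \notin U.
  by rewrite inE; apply/existsP => -[T /and4P[iT _ /negP nT _]].
have h1 : rsum x (D :|: U) <= f Z RCO (D :|: U) by case: cx => _; apply.
have h2 : rsum x (D :|: U) = rsum x (D :\: U) + rsum x U.
  rewrite -rsumUD; last by apply/setP => w; rewrite !(in_setD, in_setU, in_setI, in_set0); case: (w \in U); rewrite ?andbF ?andbT.
  by congr rsum; apply/setP => w; rewrite !(in_setD, in_setU, in_setI, in_set0); case: (w \in U); rewrite ?orbT ?orbF ?andbT.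
have h3 : rsum y (D :\: U) < rsum x (D :\: U).
  have iDU : i \in D :\: U by rewrite inE iU iD.
  rewrite /rsum (bigD1 i iDU) (bigD1 i iDU) /=.
  apply: ltr_leD => //; apply: ler_sum => k /andP[kDU _].
  have : k \in D :\: U := kDU.
  rewrite in_setD => /andP[kU kD].
  rewrite leNgt; apply/negP => ltk.
  have [T [kT tT iT]] := key k kD ltk.
  move/negP: kU; apply; rewrite inE; apply/existsP; exists T.
  rewrite kT tT iT /=; apply/set0Pn; exists k; by rewrite inE kT kD.
lra.
Qed.

Section Disc.
Variable K : nat.
Hypothesis K0 : (0 < K)%N.

Definition isK (a : R) := exists z : int, a = z%:~R / K%:R.

Lemma Kpos : 0 < (K%:R : R).
Proof. by rewrite ltr0n. Qed.

Lemma isK_int (z : int) : isK (z%:~R).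
Proof.
exists (z * K%:Z); rewrite intrM mulfK //.
by apply/lt0r_neq0; rewrite ltr0n.
Qed.

Lemma isK_nat (n : nat) : isK (n%:R).
Proof. exact: (isK_int n). Qed.

Lemma isK_add a b : isK a -> isK b -> isK (a + b).
Proof. by move=> [za ->] [zb ->]; exists (za + zb); rewrite intrD mulrDl. Qed.

Lemma isK_opp a : isK a -> isK (- a).
Proof. by move=> [za ->]; exists (- za); rewrite intrN mulNr. Qed.

Lemma isK_sub a b : isK a -> isK b -> isK (a - b).
Proof. by move=> ha hb; apply: isK_add => //; apply: isK_opp. Qed.

Lemma isK_0 : isK 0.
Proof. exact: (isK_nat 0). Qed.

Lemma isK_sum (X : {set V}) (F : V -> R) : (forall i, isK (F i)) ->
  isK (\sum_(i in X) F i).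
Proof. by move=> hF; apply: (big_ind isK isK_0 isK_add) => i _. Qed.

Lemma isK_pos a : isK a -> 0 < a -> K%:R^-1 <= a.
Proof.
move=> [z ->] h.
have Kp := Kpos.
have zp : 0 < z.
  rewrite -(ltr0z R); move: h; rewrite pmulr_lgt0 //; by rewrite invr_gt0.
rewrite -[X in X <= _]mul1r ler_pM2r ?invr_gt0 //.
by rewrite ler1z -gtz0_ge1.
Qed.

Lemma isK_ind (b1 b2 : bool) : isK ((b1%:R - b2%:R) / K%:R).
Proof. by exists (b1%:Z - b2%:Z); rewrite intrB. Qed.

Definition inS (r : {ffun V -> R}) := in_core Z RCO r /\ in_QK K r.

Lemma sum_ind (Y : {set V}) (i : V) :
  \sum_(k in Y) ((k == i)%:R : R) = (i \in Y)%:R.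
Proof.
case: (boolP (i \in Y)) => iY.
  rewrite (bigD1 i iY) /= eqxx big1 ?addr0 // => k /andP[_ /negbTE ->] //.
rewrite big1 // => k kY; case: eqP => // e; by move: iY; rewrite -e kY.
Qed.

Lemma sum_indT (i : V) : \sum_k ((k == i)%:R : R) = 1.
Proof. by rewrite (bigD1 i) //= eqxx big1 ?addr0 // => k /negbTE ->. Qed.

Lemma rsum_move (r : {ffun V -> R}) i j (Y : {set V}) :
  rsum (move K r i j) Y = rsum r Y + ((i \in Y)%:R - (j \in Y)%:R) / K%:R.
Proof.
rewrite /rsum; under eq_bigr => k _ do rewrite ffunE.
by rewrite big_split /= -mulr_suml sumrB !sum_ind.
Qed.

Lemma isK_rsum (r : {ffun V -> R}) X : in_QK K r -> isK (rsum r X).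
Proof. by move=> q; apply: isK_sum. Qed.

Lemma isK_slack (r : {ffun V -> R}) (Y : {set V}) : isK RCO -> in_QK K r -> Y != set0 ->
  isK (f Z RCO Y - rsum r Y).
Proof.
move=> hR q Y0; rewrite fE //.
apply: isK_sub; last exact: isK_rsum.
by apply: isK_add; [apply: isK_sub => //; apply: isK_nat | apply: isK_nat].
Qed.

Lemma move_inS (r : {ffun V -> R}) i j : inS r -> isK RCO -> i != j ->
  (forall Y : {set V}, i \in Y -> j \notin Y -> rsum r Y < f Z RCO Y) ->
  inS (move K r i j).
Proof.
move=> [/core_iff [sT hY] q] hR ij hs; split.
  apply/core_iff; split.
    by rewrite rsum_move !inE subrr mul0r addr0.
  move=> Y; rewrite rsum_move.
  case: (boolP (i \in Y)) => iY; case: (boolP (j \in Y)) => jY.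
  - by rewrite subrr mul0r addr0.
  - have Y0 : Y != set0 by apply/set0Pn; exists i.
    have := @isK_pos _ (@isK_slack r Y hR q Y0); have := hs Y iY jY.
    rewrite /= subr0 mul1r; move=> h1 h2; have h3 : 0 < f Z RCO Y - rsum r Y by lra.
    have := h2 h3; lra.
  - rewrite /= sub0r mulNr mul1r; have := hY Y; have : 0 < K%:R^-1 :> R by rewrite invr_gt0 Kpos.
    lra.
  - by rewrite subrr mul0r addr0.
move=> k; rewrite ffunE; apply: isK_add; [exact: q | exact: isK_ind].
Qed.

Lemma convex_ex (w : {ffun V -> R}) (hw : forall k, 0 < w k) (r s : {ffun V -> R}) i j :
  i != j -> K%:R^-1 <= r i - s i -> K%:R^-1 <= s j - r j ->
  g w (move K r j i) + g w (move K s i j) <= g w r + g w s.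
Proof.
move=> ij hi hj; rewrite /g -!big_split /=; apply: ler_sum => k _; rewrite !ffunE.
rewrite -!mulrDl; apply: ler_wpM2r; first by rewrite invr_ge0 ltW.
have tp : 0 < K%:R^-1 :> R by rewrite invr_gt0 Kpos.
have eT : (true%:R : R) = 1 by [].
have eF : (false%:R : R) = 0 by [].
have [->|ki] := eqVneq k i.
  rewrite (negbTE ij) ?eqxx ?eT ?eF.
  set t := K%:R^-1 in hi hj tp *.
  have h : 0 <= t * (r i - s i - t) by apply: mulr_ge0; lra.
  nra.
have [->|kj] := eqVneq k j.
  rewrite ?eT ?eF.
  set t := K%:R^-1 in hi hj tp *.
  have h : 0 <= t * (s j - r j - t) by apply: mulr_ge0; lra.
  nra.
by rewrite ?eF subrr mul0r !addr0.
Qed.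

Definition dist (r s : {ffun V -> R}) := \sum_k `|r k - s k|.

Lemma dist_ex (r s : {ffun V -> R}) i j :
  i != j -> K%:R^-1 <= r i - s i -> K%:R^-1 <= s j - r j ->
  dist r (move K s i j) + 2 / K%:R = dist r s.
Proof.
move=> ij hi hj.
have -> : dist r (move K s i j) =
   \sum_k (`|r k - s k| - ((k == i)%:R + (k == j)%:R) / K%:R).
  apply: eq_bigr => k _; rewrite ffunE.
  have tp : 0 < K%:R^-1 :> R by rewrite invr_gt0 Kpos.
  have eT : (true%:R : R) = 1 by [].
  have eF : (false%:R : R) = 0 by [].
  have [->|ki] := eqVneq k i.
    rewrite (negbTE ij) ?eqxx ?eT ?eF !ger0_norm; lra.
  have [->|kj] := eqVneq k j.
    rewrite ?eT ?eF !ler0_norm; lra.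
  by rewrite !eF subrr addr0 !mul0r addr0 subr0.
rewrite sumrB -mulr_suml big_split /= !sum_indT /dist; lra.
Qed.

Lemma rsumT (x : {ffun V -> R}) : rsum x setT = \sum_k x k.
Proof. by apply: eq_bigl => k; rewrite inE. Qed.

Lemma opt_step (w : {ffun V -> R}) (hw : forall k, 0 < w k) (r s : {ffun V -> R}) :
  (0 < #|V|)%N -> inS r -> isK RCO ->
  (forall i j, admissible Z RCO r i j -> g w r <= g w (move K r i j)) ->
  inS s -> r = s \/ exists s', [/\ inS s', g w s' <= g w s & dist r s' + 2 / K%:R = dist r s].
Proof.
move=> V0 Sr hR stat Ss.
have cr := (core_iff r).1 Sr.1; have cs := (core_iff s).1 Ss.1.
case: (boolP [exists i, s i < r i]) => [/existsP[i lt] | /existsPn nlt].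
  right.
  have [j [ltj A B]] := @exchange r s i V0 cr cs lt.
  have ij : i != j by apply/eqP => e; move: ltj; rewrite -e; lra.
  have hi : K%:R^-1 <= r i - s i.
    by apply: isK_pos; [apply: isK_sub; [exact: Sr.2 | exact: Ss.2] | lra].
  have hj : K%:R^-1 <= s j - r j.
    by apply: isK_pos; [apply: isK_sub; [exact: Ss.2 | exact: Sr.2] | lra].
  have Ss' : inS (move K s i j).
    apply: move_inS => // Y iY jY.
    have := cs.2 Y; rewrite le_eqVlt => /orP[/eqP e|//]; exfalso.
    by move/negP: jY; apply; apply: A iY _; apply/eqP.
  have adm : admissible Z RCO r j i.
    have [D [jD tD minD]] := @dep_min r j V0 cr.
    exists D; split; first exact: is_dep_of.
    by split; [exact: (B D jD tD) | exact: ij].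
  have h1 := stat j i adm.
  have h2 := @convex_ex w hw r s i j ij hi hj.
  have h3 := @dist_ex r s i j ij hi hj.
  exists (move K s i j); split => //; lra.
left.
have h : \sum_k (s k - r k) = 0.
  by rewrite sumrB -!rsumT cr.1 cs.1 subrr.
apply/ffunP => k.
have pos : forall k', xpredT k' -> 0 <= s k' - r k'.
  by move=> k' _; have := nlt k'; rewrite -leNgt; lra.
have := @psumr_eq0P _ _ xpredT (fun k => s k - r k) pos h k isT.
by move=> e; lra.
Qed.

Lemma optimal (w : {ffun V -> R}) (hw : forall k, 0 < w k) (r : {ffun V -> R}) :
  (0 < #|V|)%N -> inS r -> isK RCO ->
  (forall i j, admissible Z RCO r i j -> g w r <= g w (move K r i j)) ->
  forall s, inS s -> g w r <= g w s.
Proof.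
move=> V0 Sr hR stat s Ss.
have dge : forall s, 0 <= dist r s by move=> s'; apply: sumr_ge0 => k _.
have tp : 0 < K%:R^-1 :> R by rewrite invr_gt0 Kpos.
have [n hn] : exists n : nat, dist r s <= n%:R / K%:R.
  have := @archi_boundP _ (dist r s * K%:R) (mulr_ge0 (dge s) (ltW Kpos)).
  move=> h; exists (Num.Def.archi_bound (dist r s * K%:R)).
  by rewrite ler_pdivlMr ?Kpos // ltW.
elim: n s Ss hn => [|n IH] s Ss hn.
  case: (@opt_step w hw r s V0 Sr hR stat Ss) => [->|[s' [Ss' g' d']]] //.
  have := dge s'; move: hn; rewrite mul0r; lra.
case: (@opt_step w hw r s V0 Sr hR stat Ss) => [->|[s' [Ss' g' d']]] //.
have : dist r s' <= n%:R / K%:R.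
  move: hn; rewrite -natr1 mulrDl; lra.
by move/(IH s' Ss') => h; apply: le_trans h g'.
Qed.

Lemma coord_bounds (x : {ffun V -> R}) k : (1 < #|V|)%N -> inS x -> 0 <= x k <= RCO.
Proof.
move=> V1 [[ach sT] _].
have ge0 : forall k', 0 <= x k'.
  move=> k'; have : [set k'] \proper setT.
    rewrite properT; apply/negP => /eqP e.
    by move: V1; rewrite -cardsT -e cards1.
  move/ach; rewrite /rsum big_set1 /Hc setUCr => h; apply: le_trans h.
  by rewrite subr_ge0 ler_nat; apply: H_mono; apply: subsetT.
rewrite ge0 /= -sT rsumT (bigD1 k) //= lerDl; apply: sumr_ge0 => *; exact: ge0.
Qed.

Variable M : nat.
Hypothesis hM : RCO * K%:R < M%:R.

Definition enc (x : {ffun V -> R}) : {ffun V -> 'I_M.+1} :=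
  [ffun k => inord `|Num.floor (x k * K%:R)|%N].

Lemma enc_val (x : {ffun V -> R}) k : (1 < #|V|)%N -> inS x ->
  x k = (val (enc x k))%:R / K%:R.
Proof.
move=> V1 Sx; have /andP[l u] := @coord_bounds x k V1 Sx.
have [z ez] := Sx.2 k.
have Kp := Kpos.
have xz : x k * K%:R = z%:~R by rewrite ez mulfVK // lt0r_neq0.
have z0 : 0 <= z by rewrite -(ler0z R) -xz mulr_ge0 // ltW.
have ze : z = `|z|%N :> int by rewrite gez0_abs.
have zM : (`|z| < M.+1)%N.
  have : (`|z|%N%:R : R) < M%:R.
    have -> : (`|z|%N%:R : R) = z%:~R by rewrite [in RHS]ze.
    rewrite -xz; apply: le_lt_trans hM; rewrite ler_pM2r //.
  by rewrite ltr_nat => /ltnW.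
rewrite ffunE xz intrKfloor (_ : val (inord `|z| : 'I_M.+1) = `|z|%N); last exact: inordK.
have -> : (`|z|%N%:R : R) = z%:~R by rewrite [in RHS]ze.
by rewrite -xz mulfK // lt0r_neq0.
Qed.

Lemma enc_inj (x y : {ffun V -> R}) : (1 < #|V|)%N -> inS x -> inS y ->
  enc x = enc y -> x = y.
Proof.
move=> V1 Sx Sy e; apply/ffunP => k.
by rewrite (@enc_val x k V1 Sx) (@enc_val y k V1 Sy) e.
Qed.

End Disc.

End Aux.

Theorem theorem2 (R : realType) (V Pk : finType) (Z : V -> {set Pk})
  (hV : (1 < #|V|)%N)
  (RCO : R) (hRCO : is_RCO Z RCO)
  (Pstar : {set {set V}}) (hP : fundamental_partition Z RCO Pstar)
  (hP2 : (2 <= #|Pstar|)%N)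
  (w : {ffun V -> R}) (hw : forall i, 0 < w i)
  (r : nat -> {ffun V -> R})
  (h0 : in_core Z RCO (r 0%N) /\ in_QK (#|Pstar|).-1 (r 0%N))
  (hstep : forall n, SDA_step Z RCO (#|Pstar|).-1 w (r n) (r n.+1)) :
  exists N : nat,
    (forall n, (N <= n)%N -> r n = r N) /\
    g_minimizer Z RCO (#|Pstar|).-1 w (r N).
Proof.
have K0 : (0 < (#|Pstar|).-1)%N by move: hP2; case: #|Pstar| => [|[|n]].
set K := (#|Pstar|).-1 in K0 h0 hstep *.
have V0 : (0 < #|V|)%N by apply: ltnW.
have hR : isK R K RCO.
  case: h0 => [[_ sT] q]; rewrite -sT; exact: isK_rsum.
have Sall : forall n, inS R V Pk Z RCO K (r n).
  elim => [|n IH]; first exact: h0.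
  case: (hstep n) => [[i [j [[D [dep [jD ji]]] [_ [_ ->]]]]] | [_ ->]] //.
  apply: move_inS => //; first by rewrite eq_sym.
  move=> Y iY jY.
  apply: (@is_dep_slack R V Pk Z RCO (r n) i D Y ((core_iff R V Pk Z RCO (r n)).1 IH.1) dep iY).
  by apply/negP => /subsetP /(_ j jD); apply/negP.
have stay : forall n, r n.+1 = r n ->
   (forall i j, admissible Z RCO (r n) i j -> g w (r n) <= g w (move K (r n) i j))
   /\ r n.+2 = r n.+1.
  move=> n e; case: (hstep n) => [[i [j [adm [_ [lt e']]]]] | [st _]].
    by move: lt; rewrite -e' e ltxx.
  split => //.
  case: (hstep n.+1) => [[i [j [adm [_ [lt _]]]]] | [_ ->]] //.
  move: adm lt; rewrite e => adm lt; have := st i j adm.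
  by move/(lt_le_trans lt); rewrite ltxx.
have [N eN] : exists N, r N.+1 = r N.
  apply: NNPP => hne.
  have dec : forall n, g w (r n.+1) < g w (r n).
    move=> n; case: (hstep n) => [[i [j [_ [_ [lt ->]]]]] | [_ e]] //.
    by exfalso; apply: hne; exists n.
  have decr : forall a b, (a < b)%N -> g w (r b) < g w (r a).
    move=> a; elim => // b IHb; rewrite ltnS leq_eqVlt => /orP[/eqP <- | lt]; first exact: dec.
    exact: lt_trans (dec b) (IHb lt).
  have R0 : 0 <= RCO.
    case/card_gt0P: V0 => k _.
    have /andP[l u] := @coord_bounds R V Pk Z RCO K (r 0%N) k hV (Sall 0%N).
    exact: le_trans l u.
  pose M := Num.Def.archi_bound (RCO * K%:R).
  have hM : RCO * K%:R < M%:R.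
    by apply: archi_boundP; apply: mulr_ge0 => //; rewrite ler0n.
  pose F := fun n : 'I_(#|{: {ffun V -> 'I_M.+1}}|.+1) => enc R V K M (r n).
  have inj : injective F.
    move=> a b e; apply: val_inj => /=.
    have rab : r a = r b := @enc_inj R V Pk Z RCO K K0 M hM _ _ hV (Sall a) (Sall b) e.
    case: (ltngtP a b) => // lt.
    - by have := decr _ _ lt; rewrite rab ltxx.
    - by have := decr _ _ lt; rewrite rab ltxx.
  by have := @leq_card _ _ F inj; rewrite card_ord ltnn.
have stays : forall m, r (N + m)%N.+1 = r (N + m)%N /\ r (N + m)%N = r N.
  elim => [|m [e1 e2]]; first by rewrite addn0; split.
  rewrite addnS; split; first exact: (stay _ e1).2.
  by rewrite e1.
exists N; split.
  by move=> n /subnKC <-; exact: (stays _).2.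
have [st _] := stay N eN.
split; first exact: (Sall N).1.
split; first exact: (Sall N).2.
move=> s cs qs; exact: (@optimal R V Pk Z RCO K K0 w hw (r N) V0 (Sall N) hR st s (conj cs qs)).
Qed.
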